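(* Let $\mathcal A$ be an abelian category. Let $0\to F\xrightarrow{i} M\xrightarrow{d} M/F\to 0$ be a fully invariant short exact sequence and $0\to G\xrightarrow{j} M\xrightarrow{p} M/G\to 0$ a short exact sequence in $\mathcal A$. (1) Let $u:F\cap G\to G$ be the inclusion monomorphism. (i) If the second short exact sequence is also fully invariant, then the inclusion monomorphism $ju:F\cap G\to M$ is fully invariant. (ii) If every morphism $G\to G$ can be extended to a morphism $M\to M$, then $u:F\cap G\to G$ is fully invariant. (2) Let $q:M/G\to M/(F+G)$ be the induced epimorphism. (i) If the second short exact sequence is also fully invariant, then the induced epimorphism $qp:M\to M/(F+G)$ is fully coinvariant. (ii) If every morphism $M/G\to M/G$ can be lifted to a morphism $M\to M$, then $q:M/G\to M/(F+G)$ is fully coinvariant.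
   Context: A monomorphism $i:K\to M$ in an abelian category is called fully invariant if for every morphism $h:M\to M$ there is a morphism $\alpha:K\to K$ with $hi=i\alpha$. An epimorphism $d:M\to C$ is called fully coinvariant if for every morphism $h:M\to M$ there is $\beta:C\to C$ with $dh=\beta d$. A short exact sequence $0\to F\xrightarrow{i} M\xrightarrow{d} C\to 0$ is called fully invariant if $i$ is fully invariant (equivalently, $d$ is fully coinvariant). *)

(* Defs.v *)
From mathcomp Require Import all_boot all_algebra.
Set Implicit Arguments. Unset Strict Implicit. Unset Printing Implicit Defensive.
Import GRing.Theory.
Local Open Scope ring_scope.

Record preadd := PreAdd {
  Obj : Type;
  Mor : Obj -> Obj -> zmodType;
  comp : forall A B C : Obj, Mor B C -> Mor A B -> Mor A C;
  idm : forall A : Obj, Mor A A;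
  compA : forall A B C D (f : Mor C D) (g : Mor B C) (h : Mor A B),
      comp f (comp g h) = comp (comp f g) h;
  comp1m : forall A B (f : Mor A B), comp (idm B) f = f;
  compm1 : forall A B (f : Mor A B), comp f (idm A) = f;
  compDl : forall A B C (f g : Mor B C) (h : Mor A B),
      comp (f + g) h = comp f h + comp g h;
  compDr : forall A B C (f : Mor B C) (g h : Mor A B),
      comp f (g + h) = comp f g + comp f h
}.
Arguments comp {p A B C}.
Arguments idm {p}.
Notation "f \oc g" := (comp f g) (at level 40, left associativity).

Section Preds.
Variable C : preadd.

Definition mono (A B : Obj C) (f : Mor A B) : Prop :=
  forall X (g h : Mor X A), f \oc g = f \oc h -> g = h.
Definition epi (A B : Obj C) (f : Mor A B) : Prop :=
  forall X (g h : Mor B X), g \oc f = h \oc f -> g = h.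

Definition is_kernel (A B K : Obj C) (f : Mor A B) (k : Mor K A) : Prop :=
  f \oc k = 0 /\
  forall X (g : Mor X A), f \oc g = 0 -> exists! h : Mor X K, k \oc h = g.
Definition is_cokernel (A B Q : Obj C) (f : Mor A B) (c : Mor B Q) : Prop :=
  c \oc f = 0 /\
  forall X (g : Mor B X), g \oc f = 0 -> exists! h : Mor Q X, h \oc c = g.

Definition short_exact (F M Q : Obj C) (i : Mor F M) (d : Mor M Q) : Prop :=
  is_kernel d i /\ is_cokernel i d.

Definition fully_invariant (K M : Obj C) (i : Mor K M) : Prop :=
  mono i /\ forall h : Mor M M, exists a : Mor K K, h \oc i = i \oc a.
Definition fully_coinvariant (M Q : Obj C) (d : Mor M Q) : Prop :=
  epi d /\ forall h : Mor M M, exists b : Mor Q Q, d \oc h = b \oc d.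

Definition fully_invariant_ses (F M Q : Obj C) (i : Mor F M) (d : Mor M Q)
  : Prop := short_exact i d /\ fully_invariant i.

Definition is_pullback (F G M P : Obj C) (i : Mor F M) (j : Mor G M)
    (v : Mor P F) (u : Mor P G) : Prop :=
  i \oc v = j \oc u /\
  forall X (a : Mor X F) (b : Mor X G), i \oc a = j \oc b ->
    exists! h : Mor X P, v \oc h = a /\ u \oc h = b.

Definition is_pushout (M Q1 Q2 Q : Obj C) (d : Mor M Q1) (p : Mor M Q2)
    (r : Mor Q1 Q) (q : Mor Q2 Q) : Prop :=
  r \oc d = q \oc p /\
  forall X (a : Mor Q1 X) (b : Mor Q2 X), a \oc d = b \oc p ->
    exists! h : Mor Q X, h \oc r = a /\ h \oc q = b.
End Preds.

Record abelian := Abelian {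
  ab_pa :> preadd;
  ab_zero : exists Z : Obj ab_pa,
      forall A, (forall f : Mor A Z, f = 0) /\ (forall f : Mor Z A, f = 0);
  ab_biprod : forall A B : Obj ab_pa, exists (S : Obj ab_pa)
      (i1 : Mor A S) (i2 : Mor B S) (p1 : Mor S A) (p2 : Mor S B),
      [/\ p1 \oc i1 = idm A, p2 \oc i2 = idm B, p1 \oc i2 = 0, p2 \oc i1 = 0
        & i1 \oc p1 + i2 \oc p2 = idm S];
  ab_kernel : forall (A B : Obj ab_pa) (f : Mor A B),
      exists (K : Obj ab_pa) (k : Mor K A), is_kernel f k;
  ab_cokernel : forall (A B : Obj ab_pa) (f : Mor A B),
      exists (Q : Obj ab_pa) (c : Mor B Q), is_cokernel f c;
  ab_mono_normal : forall (A B : Obj ab_pa) (f : Mor A B),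
      mono f -> exists (Q : Obj ab_pa) (g : Mor B Q), is_kernel g f;
  ab_epi_normal : forall (A B : Obj ab_pa) (f : Mor A B),
      epi f -> exists (K : Obj ab_pa) (g : Mor K A), is_cokernel g f
}.

(* Main.v *)
Require Import Defs.
From mathcomp Require Import all_boot all_algebra.
Set Implicit Arguments. Unset Strict Implicit.
Import GRing.Theory.
Local Open Scope ring_scope.
Definition ccA := Defs.compA.

Lemma compm0 (C : preadd) (A B X : Obj C) (f : Mor A B) : f \oc (0 : Mor X A) = 0.
Proof. have H := compDr f (0 : Mor X A) 0; rewrite addr0 in H. by apply: (addrI (f \oc 0)); rewrite addr0 -H. Qed.

Lemma comp0m (C : preadd) (A B X : Obj C) (f : Mor X A) : (0 : Mor A B) \oc f = 0.
Proof. have H := compDl (0 : Mor A B) 0 f; rewrite addr0 in H. by apply: (addrI (0 \oc f)); rewrite addr0 -H. Qed.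

Lemma kernel_mono (C : preadd) (A B K : Obj C) (f : Mor A B) (k : Mor K A) :
  is_kernel f k -> mono k.
Proof.
move=> [Hk Hu] X g h E.
have [w [_ Hw]] := Hu X (k \oc g) ltac:(by rewrite ccA Hk comp0m).
by rewrite -(Hw g erefl) (Hw h (esym E)).
Qed.

Lemma cokernel_epi (C : preadd) (A B Q : Obj C) (f : Mor A B) (c : Mor B Q) :
  is_cokernel f c -> epi c.
Proof.
move=> [Hk Hu] X g h E.
have [w [_ Hw]] := Hu X (g \oc c) ltac:(by rewrite -ccA Hk compm0).
by rewrite -(Hw g erefl) (Hw h (esym E)).
Qed.

Theorem proposition2p7 (C : abelian) (F G M MF MG : Obj C)
  (i : Mor F M) (d : Mor M MF) (j : Mor G M) (p : Mor M MG)
  (H1 : fully_invariant_ses i d) (H2 : short_exact j p)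
  (P : Obj C) (v : Mor P F) (u : Mor P G) (Hpb : is_pullback i j v u)
  (Q : Obj C) (r : Mor MF Q) (q : Mor MG Q) (Hpo : is_pushout d p r q) :
  ((fully_invariant_ses j p -> fully_invariant (j \oc u)) /\
   ((forall g : Mor G G, exists h : Mor M M, h \oc j = j \oc g) ->
      fully_invariant u)) /\
  ((fully_invariant_ses j p -> fully_coinvariant (q \oc p)) /\
   ((forall g : Mor MG MG, exists h : Mor M M, p \oc h = g \oc p) ->
      fully_coinvariant q)).
Proof.
case: H1 => [[Kd Cd] [im Hi]].
case: H2 => [Kp Cp].
have jm := kernel_mono Kp.
have de := cokernel_epi Cd.
have pe := cokernel_epi Cp.
case: Hpb => [Epb Upb].
case: Hpo => [Epo Upo].
have um : mono u.
  move=> X g h E.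
  have E2 : i \oc (v \oc g) = j \oc (u \oc g) by rewrite !ccA Epb.
  have [w [_ Hw]] := Upb X _ _ E2.
  rewrite -(Hw g (conj erefl erefl)); apply: Hw; split => //.
  apply: im; rewrite !ccA Epb -!ccA E //.
have qe : epi q.
  move=> X g h E.
  have E2 : (g \oc r) \oc d = (g \oc q) \oc p by rewrite -!ccA Epo.
  have [w [_ Hw]] := Upo X _ _ E2.
  rewrite -(Hw g (conj erefl erefl)); apply: Hw; split => //.
  apply: de; rewrite -!ccA Epo !ccA E //.
have Hd : forall h : Mor M M, exists al : Mor MF MF, d \oc h = al \oc d.
  move=> h; have [a Ha] := Hi h.
  have [w [Hw _]] := (Cd.2) _ (d \oc h) ltac:(by rewrite -ccA Ha ccA Kd.1 comp0m).
  by exists w.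
split; split.
- move=> [_ [_ Hj]]; split.
    move=> X g h E; apply: um; apply: jm; by rewrite !ccA.
  move=> h; have [a Ha] := Hi h; have [b Hb] := Hj h.
  have E2 : i \oc (a \oc v) = j \oc (b \oc u) by rewrite !ccA -Ha -Hb -!ccA Epb.
  have [c [[Hc1 Hc2] _]] := Upb _ _ _ E2.
  exists c; by rewrite ccA Hb -!ccA Hc2.
- move=> Hg; split => // g; have [h Hh] := Hg g; have [a Ha] := Hi h.
  have E2 : i \oc (a \oc v) = j \oc (g \oc u) by rewrite !ccA -Ha -Hh -!ccA Epb.
  have [c [[Hc1 Hc2] _]] := Upb _ _ _ E2.
  by exists c.
- move=> [_ [_ Hj]]; split.
    move=> X g h E; apply: qe; apply: pe; by rewrite -!ccA.
  move=> h; have [al Hal] := Hd h.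
  have [b Hb] := Hj h.
  have [be [Hbe _]] := (Cp.2) _ (p \oc h) ltac:(by rewrite -ccA Hb ccA Kp.1 comp0m).
  have E2 : (r \oc al) \oc d = (q \oc be) \oc p by rewrite -!ccA -Hal Hbe !ccA Epo.
  have [c [[Hc1 Hc2] _]] := Upo _ _ _ E2.
  exists c; rewrite -ccA -Hbe ccA -Hc2; by rewrite ccA.
- move=> Hg; split => // g; have [h Hh] := Hg g; have [al Hal] := Hd h.
  have E2 : (r \oc al) \oc d = (q \oc g) \oc p by rewrite -!ccA -Hal -Hh !ccA Epo.
  have [c [[Hc1 Hc2] _]] := Upo _ _ _ E2.
  by exists c.
Qed.
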